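(* Let $V$ be a finite set of nodes and let $C=\{\mathbf{t}^1,\dots,\mathbf{t}^{|C|}\}$ be a finite collection of cascades on $V$, where each cascade $\mathbf{t}^c=(t^c_v)_{v\in V}$ assigns to each node $v$ an infection time $t^c_v\in\mathbb{R}\cup\{\infty\}$ ($t^c_v=\infty$ meaning $v$ is not infected in cascade $c$). For every cascade $c$ and every ordered pair of distinct nodes $(i,j)$ with $t^c_i<t^c_j<\infty$, let $w_c(i,j)=\varepsilon^{-1} f(t^c_j\mid t^c_i;\alpha)\ge 0$, where $f(\cdot\mid\cdot;\alpha)\ge 0$ is a pairwise transmission likelihood and $\varepsilon>0$. For a directed graph $G$ on $V$, identified with its edge set $G\subseteq V\times V$, define $$F(\mathbf{t}^c\mid G)=\sum_{j\in V:\ t^c_j<\infty}\log\Big(1+\sum_{i\in V:\ (i,j)\in G,\ t^c_i<t^c_j} w_c(i,j)\Big),$$ and $F_C(\mathbf{t}^1,\dots,\mathbf{t}^{|C|}\mid G)=\sum_{c} F(\mathbf{t}^c\mid G)$. Then $G\mapsto F_C(\mathbf{t}^1,\dots,\mathbf{t}^{|C|}\mid G)$ is a submodular set function on subsets of $V\times V$, i.e., for all $A\subseteq B\subseteq V\times V$ and every $s\in (V\times V)\setminus B$, $F_C(A\cup\{s\})-F_C(A)\ge F_C(B\cup\{s\})-F_C(B)$.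
   Context: The term $1$ inside the logarithm accounts for an external source node connected to every node by an edge of likelihood $\varepsilon$ (normalized weight $\varepsilon^{-1}\varepsilon=1$), present in every graph including the empty one; thus $F_C$ of the empty graph is $0$. $F_C$ is the improvement in log-likelihood of the observed cascades under $G$ relative to the empty graph, in the model where cascades spread as directed trees over $G$ and the likelihood of a cascade sums, over all spanning trees of the infected nodes supported by $G$, the product of pairwise transmission likelihoods along tree edges. *)

(* Defs.v *)
From HB Require Import structures.
From mathcomp Require Import all_boot all_order all_algebra.
From mathcomp Require Import reals exp.
Set Implicit Arguments. Unset Strict Implicit. Unset Printing Implicit Defensive.
Import Order.TTheory GRing.Theory Num.Theory.
Local Open Scope ring_scope.

(* An infection time: [Some t] = infected at time t, [None] = time infinity
   (not infected). A cascade assigns an infection time to every node. *)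
Definition cascade (R : realType) (V : finType) := V -> option R.

Definition before (R : realType) (ti tj : option R) : bool :=
  match ti, tj with
  | Some a, Some b => a < b
  | _, _ => false
  end.

Definition infected (R : realType) (t : option R) : bool :=
  if t is Some _ then true else false.

(* w_c(i,j) = eps^-1 * f(t_j | t_i); f tj ti is the pairwise transmission
   likelihood (alpha fixed and absorbed into f). Only used when t_i < t_j < oo. *)
Definition wgt (R : realType) (V : finType) (f : R -> R -> R) (eps : R)
  (t : cascade R V) (i j : V) : R :=
  match t i, t j with
  | Some ti, Some tj => eps^-1 * f tj ti
  | _, _ => 0
  end.

Definition Fcasc (R : realType) (V : finType) (f : R -> R -> R) (eps : R)
  (t : cascade R V) (G : {set V * V}) : R :=
  \sum_(j : V | infected (t j))
     ln (1 + \sum_(i : V | ((i, j) \in G) && before (t i) (t j)) wgt f eps t i j).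

Definition FC (R : realType) (V : finType) (m : nat) (f : R -> R -> R) (eps : R)
  (casc : 'I_m -> cascade R V) (G : {set V * V}) : R :=
  \sum_(c < m) Fcasc f eps (casc c) G.

(* Main.v *)
Require Import Defs.
From HB Require Import structures.
From mathcomp Require Import all_boot all_order all_algebra.
From mathcomp Require Import reals exp.
From mathcomp Require Import ring lra.
Import Order.TTheory GRing.Theory Num.Theory.
Local Open Scope ring_scope.

Lemma key (R : realType) (a b d : R) : 0 <= a -> a <= b -> 0 <= d ->
  ln (1 + b + d) - ln (1 + b) <= ln (1 + a + d) - ln (1 + a).
Proof.
move=> a0 ab d0.
have b0 : 0 <= b by apply: le_trans ab.
have P : forall x : R, 0 < x -> x \is Num.pos by move=> x; rewrite posrE.
have h1 : 0 < 1 + b + d by rewrite -addrA ltr_pwDl // addr_ge0.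
have h2 : 0 < 1 + a + d by rewrite -addrA ltr_pwDl // addr_ge0.
have h3 : 0 < 1 + a by rewrite ltr_pwDl.
have h4 : 0 < 1 + b by rewrite ltr_pwDl.
suff H : ln (1 + b + d) + ln (1 + a) <= ln (1 + a + d) + ln (1 + b).
  by lra.
have e1 := lnM (P _ h1) (P _ h3); have e2 := lnM (P _ h2) (P _ h4).
rewrite /= in e1 e2; rewrite -e1 -e2 ler_ln ?P ?mulr_gt0 //.
rewrite -subr_ge0.
have -> : (1 + a + d) * (1 + b) - (1 + b + d) * (1 + a) = d * (b - a) by ring.
by rewrite mulr_ge0 // subr_ge0.
Qed.

Section S.
Variables (R : realType) (V : finType) (f : R -> R -> R) (eps : R).
Hypothesis heps : 0 < eps.
Hypothesis hf : forall a b : R, 0 <= f a b.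

Lemma wgt_ge0 (t : cascade R V) (i j : V) : 0 <= wgt f eps t i j.
Proof.
rewrite /wgt; case: (t i) => [x|]; case: (t j) => [y|] //.
by apply: mulr_ge0; [rewrite invr_ge0 ltW | apply: hf].
Qed.

Definition S (t : cascade R V) (G : {set V * V}) j :=
  \sum_(i : V | ((i, j) \in G) && before (t i) (t j)) wgt f eps t i j.

Lemma S_ge0 (t : cascade R V) (G : {set V * V}) (j : V) : 0 <= S t G j.
Proof. by apply: sumr_ge0 => i _; apply: wgt_ge0. Qed.

Lemma S_mono (t : cascade R V) (A B : {set V * V}) (j : V) : A \subset B -> S t A j <= S t B j.
Proof.
move=> AB; rewrite /S [X in X <= _]big_mkcond [X in _ <= X]big_mkcond /=.
apply: ler_sum => i _.
case: ifP => [/andP[hA hb]|_].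
  by rewrite (subsetP AB _ hA) hb.
by case: ifP => _ //; apply: wgt_ge0.
Qed.

Lemma S_U1 (t : cascade R V) (A : {set V * V}) (s : V * V) (j : V) : s \notin A ->
  S t (s |: A) j = S t A j + S t [set s] j.
Proof.
move=> sA; rewrite /S !(big_mkcond (fun i => _ && _)) -big_split /=.
apply: eq_bigr => i _; rewrite in_setU1 in_set1.
case: eqP => [E|_] /=.
  by rewrite E (negbTE sA) /= add0r.
by rewrite addr0.
Qed.

Lemma Fcasc_sub (t : cascade R V) (A B : {set V * V}) (s : V * V) : A \subset B -> s \notin B ->
  Fcasc f eps t (s |: B) - Fcasc f eps t B <=
  Fcasc f eps t (s |: A) - Fcasc f eps t A.
Proof.
move=> AB sB.
have sA : s \notin A by apply: contra sB; apply: (subsetP AB).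
rewrite /Fcasc -!sumrB; apply: ler_sum => j _.
rewrite -!/(S t _ j) !S_U1 // !addrA.
apply: key; [exact: S_ge0 | exact: S_mono | exact: S_ge0].
Qed.
End S.

Theorem theorem3 (R : realType) (V : finType) (m : nat)
  (casc : 'I_m -> cascade R V) (f : R -> R -> R) (eps : R)
  (heps : 0 < eps) (hf : forall a b : R, 0 <= f a b)
  (A B : {set V * V}) (s : V * V) :
  A \subset B -> s \notin B ->
  FC f eps casc (s |: A) - FC f eps casc A >=
  FC f eps casc (s |: B) - FC f eps casc B.
Proof.
move=> AB sB; rewrite /FC -!sumrB; apply: ler_sum => c _.
exact: Fcasc_sub.
Qed.
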